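(* Let $a,b\in\mathbb{Z}$. The degree 4 symplectic polynomial $q(x)=x^4+ax^3+bx^2+ax+1$ satisfies the homological criterion (i.e. it is symplectically irreducible, is not a cyclotomic polynomial, and is not a polynomial in $x^k$ for any $k>1$) if and only if $a\ne0$, $(a,b)\notin\{(1,1),(-1,1)\}$, and $a^2-4b+8$ is not a perfect square.
   Context: A symplectic polynomial is an even-degree integer polynomial that is monic and palindromic (equivalently, the characteristic polynomial of an element of $\mathrm{Sp}(2n,\mathbb{Z})$). A symplectic polynomial is symplectically irreducible if it is not a product of two nontrivial symplectic polynomials. A cyclotomic polynomial is the minimal polynomial over $\mathbb{Q}$ of a primitive $n$-th root of unity. *)

(* Defs.v *)
From mathcomp Require Import all_boot all_order all_algebra all_field.
Set Implicit Arguments. Unset Strict Implicit. Unset Printing Implicit Defensive.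
Import GRing.Theory Num.Theory.
Local Open Scope ring_scope.

Definition symplectic (p : {poly int}) : Prop :=
  [/\ p \is monic, ~~ odd (size p).-1 &
      forall i : nat, (i <= (size p).-1)%N -> p`_i = p`_((size p).-1 - i)].

Definition symp_irreducible (p : {poly int}) : Prop :=
  ~ exists f g : {poly int},
      [/\ symplectic f, symplectic g, (1 < size f)%N, (1 < size g)%N & p = f * g].

Definition is_cyclotomic (p : {poly int}) : Prop :=
  exists n : nat, (0 < n)%N /\ p = 'Phi_n.

Definition poly_in_Xk (p : {poly int}) (k : nat) : Prop :=
  exists r : {poly int}, p = r \Po 'X^k.

Definition homological_criterion (p : {poly int}) : Prop :=
  [/\ symp_irreducible p, ~ is_cyclotomic p &
      forall k : nat, (1 < k)%N -> ~ poly_in_Xk p k].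

Definition q4 (a b : int) : {poly int} :=
  'X^4 + a%:P * 'X^3 + b%:P * 'X^2 + a%:P * 'X + 1.

(* Main.v *)
Require Import Defs.
From mathcomp Require Import all_boot all_order all_algebra all_field.
From mathcomp Require Import ring lra zify.
Import GRing.Theory Num.Theory.
Local Open Scope ring_scope.

Lemma q4_coef (a b : int) (i : nat) :
  (q4 a b)`_i =
  if i == 0%N then 1 else if i == 1%N then a else if i == 2%N then b
  else if i == 3%N then a else if i == 4%N then 1 else 0.
Proof. rewrite /q4 !coefE; case: i => [|[|[|[|[|i]]]]] //=; ring. Qed.

Lemma q4_Poly (a b : int) : q4 a b = Poly [:: 1; a; b; a; 1].
Proof.
apply/polyP => i; rewrite coef_Poly q4_coef.
by case: i => [|[|[|[|[|i]]]]] //=; rewrite nth_nil.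
Qed.

Lemma size_q4 (a b : int) : size (q4 a b) = 5%N.
Proof. by rewrite q4_Poly (@PolyK _ 1) //= oner_neq0. Qed.

Lemma par (a b m : int) : a ^+ 2 - 4 * b + 8 = m ^+ 2 -> exists c, 2 * c = a + m.
Proof.
move=> h.
have ha := divz_eq a 2; have hm := divz_eq m 2.
have ra : (0 <= (a %% 2)%Z < 2)%R by rewrite modz_ge0 // ltz_pmod.
have rm : (0 <= (m %% 2)%Z < 2)%R by rewrite modz_ge0 // ltz_pmod.
move: h ha hm ra rm.
set x := (a %/ 2)%Z; set r := (a %% 2)%Z; set y := (m %/ 2)%Z; set s := (m %% 2)%Z.
move=> h ha hm ra rm.
have [r0|r1] : r = 0 \/ r = 1 by lia.
all: have [s0|s1] : s = 0 \/ s = 1 by lia.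
- exists (x + y); rewrite ha hm r0 s0; ring.
- exfalso; move: h; rewrite ha hm r0 s1 !expr2; lia.
- exfalso; move: h; rewrite ha hm r1 s0 !expr2; lia.
- exists (x + y + 1); rewrite ha hm r1 s1; ring.
Qed.
Lemma PhiE n s : (0 < n)%N -> divisors n = s -> \prod_(d <- s) 'Phi_d = 'X^n - 1 :> {poly int}.
Proof. by move=> n0 <-; apply: prod_Cyclotomic. Qed.
Lemma canc (c x y : {poly int}) : c != 0 -> c * x = c * y -> x = y.
Proof. by move=> c0; apply: mulfI. Qed.
Lemma Xm1 : ('X - 1 : {poly int}) != 0.
Proof. by rewrite -size_poly_eq0 size_XsubC. Qed.
Lemma Phi1 : 'Phi_1 = 'X - 1 :> {poly int}.
Proof. have := PhiE 1 [::1%N] isT (erefl _). by rewrite big_seq1 expr1. Qed.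
Lemma Phi2 : 'Phi_2 = 'X + 1 :> {poly int}.
Proof.
have := PhiE 2 [::1;2]%N isT (erefl _). rewrite !big_cons big_nil Phi1 => h.
apply: (@canc ('X - 1) _ _ Xm1). rewrite mulr1 in h. rewrite h. ring.
Qed.
Lemma Phi5 : 'Phi_5 = 'X^4 + 'X^3 + 'X^2 + 'X + 1 :> {poly int}.
Proof.
have := PhiE 5 [::1;5]%N isT (erefl _). rewrite !big_cons big_nil Phi1 => h.
apply: (@canc ('X - 1) _ _ Xm1). rewrite mulr1 in h. rewrite h. ring.
Qed.
Lemma Phin0 n : 'Phi_n != 0 :> {poly int}.
Proof. exact/monic_neq0/Cyclotomic_monic. Qed.
Ltac phi n s c :=
  let h := fresh "h" in
  have h := PhiE n s isT (erefl _); rewrite !big_cons big_nil in h;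
  apply: (@canc c); [by rewrite ?mulf_neq0 ?Phin0 |];
  transitivity ('X^n - 1 : {poly int}); [by rewrite -h; ring|].
Lemma Phi3 : 'Phi_3 = 'X^2 + 'X + 1 :> {poly int}.
Proof. phi 3%N [::1;3]%N ('Phi_1 : {poly int}). rewrite Phi1; ring. Qed.
Lemma Phi4 : 'Phi_4 = 'X^2 + 1 :> {poly int}.
Proof. phi 4%N [::1;2;4]%N ('Phi_1 * 'Phi_2 : {poly int}). rewrite Phi1 Phi2; ring. Qed.
Lemma Phi6 : 'Phi_6 = 'X^2 - 'X + 1 :> {poly int}.
Proof. phi 6%N [::1;2;3;6]%N ('Phi_1 * 'Phi_2 * 'Phi_3 : {poly int}). rewrite Phi1 Phi2 Phi3; ring. Qed.
Lemma Phi8 : 'Phi_8 = 'X^4 + 1 :> {poly int}.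
Proof. phi 8%N [::1;2;4;8]%N ('Phi_1 * 'Phi_2 * 'Phi_4 : {poly int}). rewrite Phi1 Phi2 Phi4; ring. Qed.
Lemma Phi10 : 'Phi_10 = 'X^4 - 'X^3 + 'X^2 - 'X + 1 :> {poly int}.
Proof. phi 10%N [::1;2;5;10]%N ('Phi_1 * 'Phi_2 * 'Phi_5 : {poly int}). rewrite Phi1 Phi2 Phi5; ring. Qed.
Lemma Phi12 : 'Phi_12 = 'X^4 - 'X^2 + 1 :> {poly int}.
Proof. phi 12%N [::1;2;3;4;6;12]%N ('Phi_1 * 'Phi_2 * 'Phi_3 * 'Phi_4 * 'Phi_6 : {poly int}). rewrite Phi1 Phi2 Phi3 Phi4 Phi6; ring. Qed.
Local Close Scope ring_scope.
Lemma tot_factor (p n : nat) : prime p -> (0 < n)%N -> p %| n -> (p.-1 * p ^ (logn p n).-1) %| totient n.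
Proof.
move=> pp n0 pn.
have [m cop def] := pfactor_coprime pp n0.
have e0 : (0 < logn p n)%N by rewrite logn_gt0 mem_primes pp n0 pn.
rewrite [in totient n]def totient_coprime; last by rewrite coprime_sym coprimeXl.
by rewrite totient_pfactor // dvdn_mull.
Qed.
Lemma tot4 n : totient n = 4 -> n \in [:: 5; 8; 10; 12].
Proof.
move=> t4.
have n0 : (0 < n)%N by rewrite -totient_gt0 t4.
have : n %| 120.
  apply/dvdn_partP => // p; rewrite mem_primes => /and3P[pp _ pn].
  rewrite p_part.
  have := @tot_factor p n pp n0 pn; rewrite t4 => hd.
  have h1 : (p.-1 <= 4)%N by apply: dvdn_leq => //; apply: dvdn_trans hd; apply: dvdn_mulr.
  have h2 : ((logn p n).-1 <= logn p 4)%N.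
    rewrite -{1}(@pfactorK p (logn p n).-1 pp); apply: dvdn_leq_log => //.
    by apply: dvdn_trans hd; apply: dvdn_mull.
  rewrite pfactor_dvdn //.
  clear hd pn; move: pp h1 h2; case: p => [|[|[|[|[|[|p]]]]]] //=.
  - by move=> _ _; rewrite (_ : logn 2 4 = 2%N) // (_ : logn 2 120 = 3%N) //; lia.
  - by move=> _ _; rewrite (_ : logn 3 4 = 0%N) // (_ : logn 3 120 = 1%N) //; lia.
  - by move=> _ _; rewrite (_ : logn 5 4 = 0%N) // (_ : logn 5 120 = 1%N) //; lia.
rewrite dvdn_divisors // => hn.
have key : all (fun d => (totient d == 4) ==> (d \in [:: 5; 8; 10; 12])) (divisors 120) by vm_compute.
by move/allP: key => /(_ n hn); rewrite t4 eqxx.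
Qed.

Local Open Scope ring_scope.
Lemma Phi5q : 'Phi_5 = q4 1 1.
Proof. by rewrite Phi5 /q4 polyC1; ring. Qed.
Lemma Phi8q : 'Phi_8 = q4 0 0.
Proof. by rewrite Phi8 /q4 polyC0; ring. Qed.
Lemma Phi10q : 'Phi_10 = q4 (-1) 1.
Proof. by rewrite Phi10 /q4 polyCN polyC1; ring. Qed.
Lemma Phi12q : 'Phi_12 = q4 0 (-1).
Proof. by rewrite Phi12 /q4 polyCN polyC0 polyC1; ring. Qed.

Lemma q4_inj a b a' b' : q4 a b = q4 a' b' -> a = a' /\ b = b'.
Proof.
move=> e; split.
- by have := congr1 (fun p : {poly int} => p`_1) e; rewrite !q4_coef.
- by have := congr1 (fun p : {poly int} => p`_2) e; rewrite !q4_coef.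
Qed.

Definition quad (c : int) : {poly int} := 'X^2 + c%:P * 'X + 1.

Lemma quad_coef c i : (quad c)`_i =
  if i == 0%N then 1 else if i == 1%N then c else if i == 2%N then 1 else 0.
Proof. rewrite /quad !coefE; case: i => [|[|[|i]]] //=; ring. Qed.

Lemma size_quad c : size (quad c) = 3%N.
Proof.
have -> : quad c = Poly [:: 1; c; 1].
  apply/polyP => i; rewrite coef_Poly quad_coef.
  by case: i => [|[|[|i]]] //=; rewrite nth_nil.
by rewrite (@PolyK _ 1) //= oner_neq0.
Qed.

Lemma symp_quad c : symplectic (quad c).
Proof.
rewrite /symplectic size_quad; split => //.
  by apply/monicP; rewrite lead_coefE size_quad quad_coef.
by move=> i; case: i => [|[|[|i]]] //= _; rewrite !quad_coef.
Qed.

Lemma symp3 f : symplectic f -> size f = 3%N -> f = quad (f`_1).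
Proof.
move=> [mf _ pal] sf.
have l2 : f`_2 = 1 by move/monicP: mf; rewrite lead_coefE sf.
have l0 : f`_0 = 1 by rewrite (pal 0%N) ?sf.
apply/polyP => i; rewrite quad_coef.
case: i => [|[|[|i]]] //=; rewrite ?nth_default // ?sf.
lia.
Qed.

Lemma symp_sizes f g : symplectic f -> symplectic g -> (1 < size f)%N -> (1 < size g)%N ->
  size (f * g) = 5%N -> size f = 3%N /\ size g = 3%N.
Proof.
move=> [mf of_ _] [mg og _] f1 g1.
rewrite size_mul ?monic_neq0 //.
move: of_ og f1 g1; case: (size f) => [|[|[|[|[|[|sf]]]]]] //;
  case: (size g) => [|[|[|[|[|[|sg]]]]]] //.
all: move=> _ _ _ _; lia.
Qed.

Lemma q4_quad c d : quad c * quad d = q4 (c + d) (2 + c * d).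
Proof. rewrite /quad /q4 !polyCD polyCM polyC1; ring. Qed.

Theorem proposition4p1 (a b : int) :
  homological_criterion (q4 a b) <->
  [/\ a != 0, ~ ((a, b) = (1, 1) \/ (a, b) = (-1, 1)) &
      ~ exists m : int, a ^+ 2 - 4 * b + 8 = m ^+ 2].
Proof.
split.
- move=> [irr ncyc nxk]; split.
  + apply/eqP => a0; apply: (nxk 2%N isT).
    exists ('X * 'X + b%:P * 'X + 1%:P).
    rewrite a0 /q4 polyC0 polyC1 !comp_polyD !comp_polyM comp_polyX !comp_polyC; ring.
  + case=> -[ha hb]; subst a b; apply: ncyc.
    * by exists 5%N; rewrite Phi5q.
    * by exists 10%N; rewrite Phi10q.
  + move=> [m hm]; apply: irr.
    have [c hc] := par _ _ _ hm.
    have hm' : m = 2 * c - a by lia.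
    rewrite hm' !expr2 in hm.
    have hb : b = 2 + c * (a - c) by lia.
    exists (quad c), (quad (a - c)).
    split; rewrite ?size_quad //; try exact: symp_quad.
    by rewrite q4_quad hb; congr q4; ring.
- move=> [a0 nab nsq]; split.
  + move=> [f [g [sf sg f1 g1 e]]].
    have hs : size (f * g) = 5%N by rewrite -e size_q4.
    have [s1 s2] := symp_sizes _ _ sf sg f1 g1 hs.
    move: e; rewrite (symp3 _ sf s1) (symp3 _ sg s2) q4_quad => /esym /q4_inj [ha hb].
    apply: nsq; exists (f`_1 - g`_1); rewrite -ha -hb !expr2; ring.
  + move=> [n [n0 e]].
    have : totient n = 4%N.
      by have := size_Cyclotomic n; rewrite -e size_q4 => -[].
    move/tot4; rewrite !inE => /or4P[] /eqP nE; move: e; rewrite nE.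
    * by rewrite Phi5q => /q4_inj [ha hb]; apply: nab; left; rewrite ha hb.
    * by rewrite Phi8q => /q4_inj [a00 _]; move: a0; rewrite a00.
    * by rewrite Phi10q => /q4_inj [ha hb]; apply: nab; right; rewrite ha hb.
    * by rewrite Phi12q => /q4_inj [a00 _]; move: a0; rewrite a00.
  + move=> k k1 [r e].
    have := congr1 (fun p : {poly int} => p`_1) e.
    rewrite coef_comp_poly_Xn ?(ltn_trans _ k1) // q4_coef /=.
    rewrite (_ : (k %| 1)%N = false); first by move=> a00; move: a0; rewrite a00.
    by apply/negbTE; rewrite dvdn1 neq_ltn k1 orbT.
Qed.
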